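(* Let $G$ be a graph such that (i) $G[N[v]]$ is a unit interval graph for every $v\in V(G)$, (ii) $G$ has no induced subgraph isomorphic to $C_{n+4}\cup K_1$ for any $n\ge0$, and (iii) there are no $v,w\in V(G)$ with $N[v]\subsetneq N[w]$. Then $G$ has no induced subgraph isomorphic to the net.
   Context: A unit interval graph is an intersection graph of unit-length intervals on the real line. $C_m$ is the cycle of length $m$, $K_1$ a single vertex, $\cup$ disjoint union. The net is the graph on $v_1,v_2,v_3,w_1,w_2,w_3$ with edges $v_1v_2,v_1v_3,v_2v_3,v_1w_1,v_2w_2,v_3w_3$. $N[v]$ is the closed neighborhood. *)

(* Defs.v *)
From Stdlib Require Import Reals.
From mathcomp Require Import all_boot.
Set Implicit Arguments. Unset Strict Implicit. Unset Printing Implicit Defensive.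

Definition simple_graph (T : finType) (e : rel T) : Prop :=
  symmetric e /\ irreflexive e.

Definition cnbhd (T : finType) (e : rel T) (v : T) : {set T} :=
  [set w | (w == v) || e v w].

(* The induced subgraph G[S] is a unit interval graph: there is an assignment
   of closed unit intervals [f x, f x + 1] (x in S) on the real line such that
   distinct vertices of S are adjacent iff their intervals intersect. *)
Definition unit_interval_on (T : finType) (e : rel T) (S : {set T}) : Prop :=
  exists f : T -> R, forall u w, u \in S -> w \in S -> u != w ->
    (e u w <-> Rle (Rabs (Rminus (f u) (f w))) R1).

Definition has_induced (T : finType) (e : rel T) (V : finType) (h : rel V) : Prop :=
  exists phi : V -> T, injective phi /\
    forall x y, x != y -> e (phi x) (phi y) = h x y.

(* The cycle C_m on 'I_m (meaningful for m >= 3). *)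
Definition cycle_rel (m : nat) : rel 'I_m :=
  fun i j => (j == (i.+1 %% m) :> nat) || (i == (j.+1 %% m) :> nat).

Definition cycle_plus_K1_rel (m : nat) : rel (option 'I_m) :=
  fun x y => match x, y with
             | Some i, Some j => cycle_rel i j
             | _, _ => false
             end.

(* The net on 'I_6: v1,v2,v3 = 0,1,2 ; w1,w2,w3 = 3,4,5.
   Edges v1v2, v1v3, v2v3, v1w1, v2w2, v3w3. *)
Definition net_edge (a b : nat) : bool :=
  [|| (a == 0) && (b == 1), (a == 0) && (b == 2), (a == 1) && (b == 2),
      (a == 0) && (b == 3), (a == 1) && (b == 4) | (a == 2) && (b == 5)].

Definition net_rel : rel 'I_6 :=
  fun i j => net_edge i j || net_edge j i.

(* Main.v *)
Require Import Defs.
From Stdlib Require Import Reals Lra.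
From mathcomp Require Import all_boot zify.
Set Implicit Arguments. Unset Strict Implicit.

Lemma claw (T : finType) (e : rel T) : simple_graph e -> (forall v, unit_interval_on e (cnbhd e v)) ->
  forall u a b c, e u a -> e u b -> e u c -> ~~ e a b -> ~~ e a c -> ~~ e b c ->
  a != b -> a != c -> b != c -> False.
Proof.
move=> [sy ir] Hui u a b c ua ub uc ab ac bc nab nac nbc.
have [f Hf] := Hui u.
have inN : forall y, e u y -> y \in cnbhd e u by move=> y uy; rewrite inE uy orbT.
have uN : u \in cnbhd e u by rewrite inE eqxx.
have neq : forall y, e u y -> u != y by move=> y uy; apply/eqP=> E; rewrite E ir in uy.
have le1 : forall y, e u y -> Rle (Rabs (Rminus (f u) (f y))) R1.
  by move=> y uy; apply (Hf u y uN (inN y uy) (neq y uy)).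
have gt1 : forall y z, e u y -> e u z -> y != z -> ~~ e y z -> ~ Rle (Rabs (Rminus (f y) (f z))) R1.
  by move=> y z uy uz yz nyz H; move: nyz; rewrite (proj2 (Hf y z (inN y uy) (inN z uz) yz) H).
have H1 := le1 a ua. have H2 := le1 b ub. have H3 := le1 c uc.
have H4 := gt1 a b ua ub nab ab. have H5 := gt1 a c ua uc nac ac. have H6 := gt1 b c ub uc nbc bc.
move: H1 H2 H3 H4 H5 H6; unfold Rabs.
repeat match goal with |- context [Rcase_abs ?x] => destruct (Rcase_abs x) end; lra.
Qed.

Lemma maxP (P : pred nat) N : (forall j, j <= N -> ~~ P j) \/
  (exists j, [/\ j <= N, P j & forall i, j < i -> i <= N -> ~~ P i]).
Proof.
elim: N => [|N IH].
  case H0: (P 0); [right; exists 0; split => // i Hi Hi0; lia|].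
  by left => j; rewrite leqn0 => /eqP->; rewrite H0.
case HN: (P N.+1); [right; exists N.+1; split => // i H1 H2; lia|].
case: IH => [H|[j [Hj Pj Hm]]].
  left => j; rewrite leq_eqVlt; case/orP => [/eqP->|Hj]; [by rewrite HN|by apply H; rewrite -ltnS].
right; exists j; split; [lia|exact Pj|].
move=> i Hi Hi'; case E: (i == N.+1); first by move/eqP: E => ->; rewrite HN.
apply: Hm => //; move/negbT: E; lia.
Qed.

Lemma modS_ord m (i : 'I_m.+1) : i.+1 %% m.+1 = if (i : nat) < m then i.+1 else 0.
Proof.
have Hl := ltn_ord i; case: ifP => H; first by rewrite modn_small.
move/negbT: H => H; have -> : i.+1 = m.+1 by lia.
by rewrite modnn.
Qed.

Lemma cyc (T : finType) (e : rel T) : symmetric e -> forall n (q : nat -> T) x z,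
  (forall i j, i <= n.+2 -> j <= n.+2 -> e (q i) (q j) = (i == j.+1) || (j == i.+1)) ->
  (forall i j, i <= n.+2 -> j <= n.+2 -> q i = q j -> i = j) ->
  e x (q 0) -> e x (q n.+2) -> (forall i, 0 < i -> i < n.+2 -> ~~ e x (q i)) ->
  (forall i, i <= n.+2 -> x != q i) ->
  (forall i, i <= n.+2 -> z != q i) -> (forall i, i <= n.+2 -> ~~ e z (q i)) ->
  z != x -> ~~ e z x -> ~~ e x x ->
  has_induced e (@cycle_plus_K1_rel (n + 4)).
Proof.
move=> sy n q x z Hp Hi x0 xn xm xq zq zqe zx zxe xx.
pose phi (o : option 'I_(n+4)) := if o is Some i then (if (i:nat) <= n.+2 then q i else x) else z.
have big : forall i : 'I_(n+4), ~~ (i <= n.+2) -> (i : nat) = n.+3.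
  by move=> i; have := ltn_ord i; lia.
exists phi; split.
  move=> [i|] [j|] //=; rewrite /phi.
  - case: ifP => Hi'; case: ifP => Hj' E.
    + by congr Some; apply: val_inj; exact: Hi.
    + by move: (xq i Hi'); rewrite E eqxx.
    + by move: (xq j Hj'); rewrite E eqxx.
    + move/negbT: Hi' => Hi'; move/negbT: Hj' => Hj'.
      by congr Some; apply: val_inj; rewrite /= (big i Hi') (big j Hj').
  - by case: ifP => H E; [move: (zq i H)|move: zx]; rewrite E eqxx.
  - by case: ifP => H E; [move: (zq j H)|move: zx]; rewrite E eqxx.
have md : forall i : 'I_(n+4), i.+1 %% (n + 4) = if (i : nat) <= n.+2 then i.+1 else 0.
  move=> i; case: ifP => H; first by rewrite modn_small //; lia.
  move/negbT: H => H; by rewrite (big i H) -addn4 addnC modnn.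
move=> [i|] [j|] //= Hne; rewrite /phi /cycle_plus_K1_rel /cycle_rel ?md.
- have Hij : (i : nat) != j by apply: contra Hne => /eqP/val_inj ->.
  case: ifP => Hi'; case: ifP => Hj'.
  + by rewrite Hp // orbC.
  + move/negbT: Hj' => Hj'; rewrite (big j Hj') sy.
    case E0: ((i : nat) == 0); first by move/eqP: E0 => E0; rewrite E0 x0; lia.
    case En: ((i : nat) == n.+2); first by move/eqP: En => En; rewrite En xn; lia.
    rewrite (negbTE (xm i _ _)); lia.
  + move/negbT: Hi' => Hi'; rewrite (big i Hi').
    case E0: ((j : nat) == 0); first by move/eqP: E0 => E0; rewrite E0 x0; lia.
    case En: ((j : nat) == n.+2); first by move/eqP: En => En; rewrite En xn; lia.
    rewrite (negbTE (xm j _ _)); lia.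
  + move/negbT: Hi' => Hi'; move/negbT: Hj' => Hj'.
    by move: Hij; rewrite (big i Hi') (big j Hj') eqxx.
- by case: ifP => H; rewrite sy ?(negbTE (zqe i H)) ?(negbTE zxe).
- by case: ifP => H; rewrite ?(negbTE (zqe j H)) ?(negbTE zxe).
Qed.

Record Inv (T : finType) (e : rel T) (K : nat) (r s : nat -> T) : Prop := MkInv {
 iK : 3 <= K;
 ir : forall i j, i <= K -> j <= K -> e (r i) (r j) = (i == j.+1) || (j == i.+1);
 is_ : forall i j, i <= K -> j <= K -> e (s i) (s j) = (i == j.+1) || (j == i.+1);
 irs : forall i, 1 < i -> r i = s i;
 ijr : forall i j, i <= K -> j <= K -> r i = r j -> i = j;
 ijs : forall i j, i <= K -> j <= K -> s i = s j -> i = j;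
 c1 : ~~ e (r 0) (s 0); c2 : ~~ e (r 0) (s 1); c3 : ~~ e (r 1) (s 0); c4 : e (r 1) (s 1);
 d1 : r 0 != s 0; d2 : r 0 != s 1; d3 : r 1 != s 0; d4 : r 1 != s 1 }.

Lemma Inv_sym (T : finType) (e : rel T) K r s : symmetric e -> Inv e K r s -> Inv e K s r.
Proof.
move=> sy [? ? ? ? ? ? ? ? ? ? ? ? ? ?]; constructor => //; try (by move=> i Hi; symmetry; auto);
  rewrite ?[e (s _) _]sy 1?eq_sym //.
Qed.

Lemma xnr (T : finType) (e : rel T) K r s x : simple_graph e -> Inv e K r s -> e (r K) x ->
  x \notin cnbhd e (r K.-1) -> forall m, m <= K -> x != r m.
Proof.
move=> [sy irr] I rKx xB m Hm; apply/eqP => E; subst x.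
have HK := iK I.
case Em: (m == K); first by move/eqP: Em => Em; subst m; rewrite irr in rKx.
case Em1: (m == K.-1).
  by move/eqP: Em1 => Em1; subst m; move: xB; rewrite inE eqxx.
move: rKx; rewrite (ir I) //; lia.
Qed.

Lemma case1 (T : finType) (e : rel T) : simple_graph e ->
  (forall v, unit_interval_on e (cnbhd e v)) ->
  (forall n : nat, ~ has_induced e (@cycle_plus_K1_rel (n + 4))) ->
  forall K r s x j, Inv e K r s -> e (r K) x -> x \notin cnbhd e (r K.-1) ->
  j <= K - 2 -> e x (r j) -> (forall i, j < i -> i <= K - 2 -> ~~ e x (r i)) -> False.
Proof.
move=> G Hui Hcyc K r s x j I rKx xB Hj xrj Hmax.
have [sy irr] := G.
have HK := iK I.
have xr := xnr G I rKx xB.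
have hjK : j <= K by lia.
have Hs0r : forall m, m <= K -> s 0 != r m /\ ~~ e (s 0) (r m).
  move=> m; case: m => [|[|m]] Hm.
  - by split; [rewrite eq_sym; exact: (d1 I)| rewrite sy; exact: (c1 I)].
  - by split; [rewrite eq_sym; exact: (d3 I)| rewrite sy; exact: (c3 I)].
  - rewrite (irs I) //; split; last by rewrite (is_ I).
    by apply/eqP => E; have := ijs I _ _ E; lia.
have s0x : ~~ e (s 0) x.
  apply/negP => H.
  apply: (claw G Hui (u := x) (a := s 0) (b := r j) (c := r K)).
  - by rewrite sy.
  - done.
  - by rewrite sy.
  - exact: (Hs0r j hjK).2.
  - exact: (Hs0r K (leqnn K)).2.
  - rewrite (ir I) //; lia.
  - exact: (Hs0r j hjK).1.
  - exact: (Hs0r K (leqnn K)).1.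
  - by apply/eqP => /(ijr I) E; lia.
have s0nx : s 0 != x.
  by apply/eqP => E; move: (Hs0r K (leqnn K)).2; rewrite E sy rKx.
apply: (Hcyc (K - j - 2)).
apply: (cyc sy (q := fun i => r (j + i)) (x := x) (z := s 0)).
- move=> a b Ha Hb; rewrite (ir I); [|lia|lia].
  by rewrite -!addnS !eqn_add2l.
- by move=> a b Ha Hb /(ijr I) E; lia.
- by rewrite addn0.
- have -> : j + (K - j - 2).+2 = K by lia.
  by rewrite sy.
- move=> a Ha Ha'.
  case E: (j + a <= K - 2); first by apply: Hmax => //; lia.
  have -> : j + a = K.-1 by move/negbT: E; lia.
  by move: xB; rewrite inE negb_or sy => /andP [].
- by move=> a Ha; apply: xr; lia.
- by move=> a Ha; apply: (Hs0r _ _).1; lia.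
- by move=> a Ha; apply: (Hs0r _ _).2; lia.
- done.
- done.
- by rewrite irr.
Qed.

Lemma step (T : finType) (e : rel T) : simple_graph e ->
  (forall v, unit_interval_on e (cnbhd e v)) ->
  (forall n : nat, ~ has_induced e (@cycle_plus_K1_rel (n + 4))) ->
  ~ (exists v w : T, cnbhd e v \proper cnbhd e w) ->
  forall K r s, Inv e K r s -> exists r' s', Inv e K.+1 r' s'.
Proof.
move=> G Hui Hcyc Hprop K r s I.
have [sy irr] := G.
have HK := iK I.
have : ~~ (cnbhd e (r K) \subset cnbhd e (r K.-1)).
  apply/negP => Hsub; apply: Hprop; exists (r K), (r K.-1); rewrite properE Hsub /=.
  apply/subsetPn; exists (r K.-2).
  - rewrite inE; apply/orP; right; rewrite (ir I); [|lia|lia]; lia.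
  - rewrite inE negb_or; apply/andP; split.
    + by apply/eqP => /(ijr I) E; lia.
    + rewrite (ir I); [|lia|lia]; lia.
case/subsetPn => x xA xB.
have rKx : e (r K) x.
  move: xA; rewrite inE; case/orP => // /eqP E; exfalso; move: xB.
  rewrite E inE negb_or => /andP [_]; rewrite (ir I); [|lia|lia]; lia.
have sK : forall i, 1 < i -> s i = r i by move=> i Hi; rewrite (irs I).
have sKx : e (s K) x by rewrite sK; [done|lia].
have xBs : x \notin cnbhd e (s K.-1) by rewrite sK; [done|lia].
case: (maxP (fun j => e x (r j)) (K - 2)) => [Hr|[j [Hj xj Hm]]]; last first.
  by exfalso; apply: (case1 G Hui Hcyc I rKx xB Hj xj Hm).
case: (maxP (fun j => e x (s j)) (K - 2)) => [Hs|[j [Hj xj Hm]]]; last first.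
  by exfalso; apply: (case1 G Hui Hcyc (Inv_sym sy I) sKx xBs Hj xj Hm).
have xr : forall b, b <= K -> e x (r b) = (b == K).
  move=> b Hb; case Eb: (b == K); first by move/eqP: Eb => ->; rewrite sy.
  case Eb1: (b == K.-1).
    by move/eqP: Eb1 => ->; move: xB; rewrite inE negb_or sy => /andP [_] /negbTE.
  apply/negbTE/Hr; move/negbT: Eb; move/negbT: Eb1; lia.
have xs : forall b, b <= K -> e x (s b) = (b == K).
  move=> b Hb; case Eb: (b == K); first by move/eqP: Eb => ->; rewrite sy.
  case Eb1: (b == K.-1).
    by move/eqP: Eb1 => ->; move: xBs; rewrite inE negb_or sy => /andP [_] /negbTE.
  apply/negbTE/Hs; move/negbT: Eb; move/negbT: Eb1; lia.
have xnr1 := xnr G I rKx xB.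
have xns1 := xnr G (Inv_sym sy I) sKx xBs.
pose r' i := if i == K.+1 then x else r i.
pose s' i := if i == K.+1 then x else s i.
exists r', s'; constructor; rewrite /r' /s' /=.
- lia.
- move=> a b Ha Hb; case: ifP => Ea; case: ifP => Eb.
  + by move/eqP: Ea => ->; move/eqP: Eb => ->; rewrite irr; lia.
  + rewrite xr; [lia|]; move/negbT: Eb; lia.
  + rewrite sy xr; [lia|]; move/negbT: Ea; lia.
  + rewrite (ir I); [done| |]; [move/negbT: Ea|move/negbT: Eb]; lia.
- move=> a b Ha Hb; case: ifP => Ea; case: ifP => Eb.
  + by move/eqP: Ea => ->; move/eqP: Eb => ->; rewrite irr; lia.
  + rewrite xs; [lia|]; move/negbT: Eb; lia.
  + rewrite sy xs; [lia|]; move/negbT: Ea; lia.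
  + rewrite (is_ I); [done| |]; [move/negbT: Ea|move/negbT: Eb]; lia.
- by move=> i Hi; case: ifP => // _; rewrite (irs I).
- move=> a b Ha Hb; case: ifP => Ea; case: ifP => Eb.
  + by move/eqP: Ea => ->; move/eqP: Eb => ->.
  + move=> E; have Hb' : b <= K by move/negbT: Eb; lia.
    by move: (xnr1 b Hb'); rewrite E eqxx.
  + move=> E; have Ha' : a <= K by move/negbT: Ea; lia.
    by move: (xnr1 a Ha'); rewrite -E eqxx.
  + apply: (ijr I); [move/negbT: Ea|move/negbT: Eb]; lia.
- move=> a b Ha Hb; case: ifP => Ea; case: ifP => Eb.
  + by move/eqP: Ea => ->; move/eqP: Eb => ->.
  + move=> E; have Hb' : b <= K by move/negbT: Eb; lia.
    by move: (xns1 b Hb'); rewrite E eqxx.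
  + move=> E; have Ha' : a <= K by move/negbT: Ea; lia.
    by move: (xns1 a Ha'); rewrite -E eqxx.
  + apply: (ijs I); [move/negbT: Ea|move/negbT: Eb]; lia.
- by rewrite ?ifF; first exact: (c1 I); lia.
- by rewrite ?ifF; first exact: (c2 I); lia.
- by rewrite ?ifF; first exact: (c3 I); lia.
- by rewrite ?ifF; first exact: (c4 I); lia.
- by rewrite ?ifF; first exact: (d1 I); lia.
- by rewrite ?ifF; first exact: (d2 I); lia.
- by rewrite ?ifF; first exact: (d3 I); lia.
- by rewrite ?ifF; first exact: (d4 I); lia.
Qed.

Theorem mainTheorem17 (T : finType) (e : rel T) :
  simple_graph e ->
  (forall v : T, unit_interval_on e (cnbhd e v)) ->
  (forall n : nat, ~ has_induced e (@cycle_plus_K1_rel (n + 4))) ->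
  ~ (exists v w : T, cnbhd e v \proper cnbhd e w) ->
  ~ has_induced e net_rel.
Proof.
move=> G Hui Hcyc Hprop [phi [phiinj Hphi]].
have [sy irr] := G.
pose o0 := @Ordinal 6 0 isT. pose o1 := @Ordinal 6 1 isT. pose o2 := @Ordinal 6 2 isT.
pose o3 := @Ordinal 6 3 isT. pose o4 := @Ordinal 6 4 isT. pose o5 := @Ordinal 6 5 isT.
pose r i := phi (match i with 0 => o4 | 1 => o1 | 2 => o0 | _ => o3 end).
pose s i := phi (match i with 0 => o5 | 1 => o2 | 2 => o0 | _ => o3 end).
have I0 : Inv e 3 r s.
  constructor; rewrite /r /s //.
  - by case=> [|[|[|[|i]]]] [|[|[|[|j]]]] //= _ _; rewrite ?irr ?Hphi.
  - by case=> [|[|[|[|i]]]] [|[|[|[|j]]]] //= _ _; rewrite ?irr ?Hphi.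
  - by case=> [|[|[|i]]].
  - by case=> [|[|[|[|i]]]] [|[|[|[|j]]]] //= _ _ /phiinj /(congr1 val).
  - by case=> [|[|[|[|i]]]] [|[|[|[|j]]]] //= _ _ /phiinj /(congr1 val).
  - by rewrite Hphi.
  - by rewrite Hphi.
  - by rewrite Hphi.
  - by rewrite Hphi.
  - by apply/eqP => /phiinj.
  - by apply/eqP => /phiinj.
  - by apply/eqP => /phiinj.
  - by apply/eqP => /phiinj.
have All : forall k, exists r s, Inv e (k + 3) r s.
  elim=> [|k [r1 [s1 I1]]]; first by exists r, s.
  exact: (step G Hui Hcyc Hprop I1).
have [r1 [s1 I1]] := All #|T|.
pose f (i : 'I_#|T|.+1) := r1 i.
have finj : injective f.
  move=> a b E; apply: val_inj; apply: (ijr I1 _ _ E).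
  - by have := ltn_ord a; lia.
  - by have := ltn_ord b; lia.
have := leq_card f finj; rewrite card_ord; lia.
Qed.
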